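(* Let $P(\lambda)$ be a complex $n\times n$ matrix polynomial of degree $d$ and normal rank $n-k$ such that all its eigenvalues are semisimple. Let $Q_1(\lambda),Q_2(\lambda)$ be regular $k\times k$ matrix polynomials of degree $d$ whose $2dk$ eigenvalues are pairwise distinct. Let $U,V\in\mathbb C^{n\times k}$ have orthonormal columns such that the augmented matrix polynomial $$P_a(\lambda)=\begin{bmatrix}P(\lambda)& UQ_1(\lambda)\\ Q_2(\lambda)V^*&0\end{bmatrix}$$ is regular, and such that $(U,V)$ is admissible for $P$ with respect to some regular $k\times k$ matrix polynomial $Q(\lambda)$ of degree $d$ with simple eigenvalues distinct from those of $P$ (see context). Then $P_a(\lambda)$ has the following eigenvalues: (a) $2dk$ prescribed eigenvalues, which are precisely the eigenvalues of $Q_1(\lambda)$ and $Q_2(\lambda)$; (b) the random eigenvalues of $\widetilde P(\lambda)=P(\lambda)+\tau UQ(\lambda)V^*$ with the same $U$ and $V$; (c) the true eigenvalues of $P(\lambda)$.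
   Context: Normal rank: $\mathrm{nrank}(P)=\max_{\zeta}\mathrm{rank}\,P(\zeta)$; a square matrix polynomial is regular if $\det\not\equiv0$. Finite eigenvalues of $P$: $\lambda_0\in\mathbb C$ with $\mathrm{rank}\,P(\lambda_0)<\mathrm{nrank}(P)$; $\infty$ is an eigenvalue if $0$ is an eigenvalue of $\lambda^dP(1/\lambda)$. Algebraic multiplicity of $\lambda_0$ is the sum of exponents of $(\lambda-\lambda_0)$ in the nonzero invariant polynomials of the Smith form, geometric multiplicity the number of those exponents that are nonzero; semisimple means they coincide, simple means algebraic multiplicity 1. Right/left minimal indices are the degrees of a minimal-total-degree polynomial basis of the right/left rational nullspace of $P$; let $M$, $N$ be their respective sums. Admissibility: $(U,V)$ is admissible for $P$ with respect to $Q$ if for all $\tau>0$ the polynomial $\widetilde P(\lambda)=P(\lambda)+\tau UQ(\lambda)V^*$ is regular and its $nd$ eigenvalues are independent of $\tau$ and split into: (a) true eigenvalues: every eigenvalue $\lambda_0$ of $P$ is an eigenvalue of $\widetilde P$ with corresponding right/left eigenvectors satisfying $V^*x=0$, $U^*y=0$, there being $(n-k)d-M-N$ of them; (b) $M$ simple right random eigenvalues, distinct from those in (a) and from eigenvalues of $Q$, with $V^*x=0$, $U^*y\neq0$; (c) $N$ simple left random eigenvalues, distinct from those in (a),(b) and of $Q$, with $V^*x\neq0$, $U^*y=0$; (d) the $kd$ eigenvalues of $Q$, with $V^*x\neq0$, $U^*y\neq0$. The random eigenvalues are those of groups (b) and (c); the true eigenvalues of $P$ are its eigenvalues. *)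

(* Defs.v *)
(* Complex matrix polynomials over an arbitrary
   numClosedFieldType C (which includes the complex numbers). *)
From HB Require Import structures.
From mathcomp Require Import all_boot all_order all_algebra.
From Stdlib Require Import ClassicalEpsilon.

Set Implicit Arguments.
Unset Strict Implicit.
Unset Printing Implicit Defensive.

Import Order.TTheory GRing.Theory Num.Theory.
Local Open Scope ring_scope.

Section MatrixPolynomials.
Variable C : numClosedFieldType.

Definition pbool (P : Prop) : bool :=
  if excluded_middle_informative P then true else false.

Definition adjmx m n (A : 'M[C]_(m, n)) : 'M[C]_(n, m) := (map_mx Num.conj A)^T.

Definition cmx m n (A : 'M[C]_(m, n)) : 'M[{poly C}]_(m, n) := map_mx polyC A.

Definition peval m n (P : 'M[{poly C}]_(m, n)) (z : C) : 'M[C]_(m, n) :=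
  map_mx (fun p : {poly C} => p.[z]) P.

Definition mxdeg_is m n (P : 'M[{poly C}]_(m, n)) (d : nat) : Prop :=
  (\max_(i < m) \max_(j < n) size (P i j))%N = d.+1.

(* reversal  lambda^d P(1/lambda)  (entries are of degree <= d) *)
Definition revmx (d : nat) m n (P : 'M[{poly C}]_(m, n)) : 'M[{poly C}]_(m, n) :=
  map_mx (fun p : {poly C} => \poly_(l < d.+1) p`_(d - l)) P.

Definition nrank m n (P : 'M[{poly C}]_(m, n)) : nat :=
  (\max_(i < m.+1 | pbool (exists z : C, \rank (peval P z) = i)) i)%N.

Definition regular n (P : 'M[{poly C}]_n) : Prop := \det P != 0.

Definition unimodular n (E : 'M[{poly C}]_n) : Prop := \det E \is a GRing.unit.

Definition diag_seq m n (s : seq {poly C}) : 'M[{poly C}]_(m, n) :=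
  \matrix_(i < m, j < n) if (i == j :> nat) then s`_i else 0.

Definition smith_invariants m n (P : 'M[{poly C}]_(m, n)) (s : seq {poly C}) : Prop :=
  exists (E : 'M[{poly C}]_m) (F : 'M[{poly C}]_n),
    [/\ unimodular E, unimodular F, P = E *m diag_seq m n s *m F,
        (size s <= minn m n)%N
      & all (fun p => p \is monic) s && sorted (fun p q => p %| q) s].

Definition invpolys m n (P : 'M[{poly C}]_(m, n)) : seq {poly C} :=
  epsilon (inhabits [::]) (smith_invariants P).

Definition alg_mult m n (P : 'M[{poly C}]_(m, n)) (z : C) : nat :=
  (\sum_(p <- invpolys P) mup z p)%N.
Definition geo_mult m n (P : 'M[{poly C}]_(m, n)) (z : C) : nat :=
  count (fun p => root p z) (invpolys P).

(* ---- extended eigenvalues: Some z = finite z, None = infinity ---- *)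
Definition ext_eval (d : nat) m n (P : 'M[{poly C}]_(m, n)) (e : option C) : 'M[C]_(m, n) :=
  match e with Some z => peval P z | None => peval (revmx d P) 0 end.

Definition pm_eigenvalue (d : nat) m n (P : 'M[{poly C}]_(m, n)) (e : option C) : Prop :=
  match e with
  | Some z => (\rank (peval P z) < nrank P)%N
  | None => (\rank (peval (revmx d P) 0) < nrank (revmx d P))%N
  end.

Definition mult (d : nat) m n (P : 'M[{poly C}]_(m, n)) (e : option C) : nat :=
  match e with Some z => alg_mult P z | None => alg_mult (revmx d P) 0 end.

Definition gmult (d : nat) m n (P : 'M[{poly C}]_(m, n)) (e : option C) : nat :=
  match e with Some z => geo_mult P z | None => geo_mult (revmx d P) 0 end.

Definition semisimple (d : nat) m n (P : 'M[{poly C}]_(m, n)) (e : option C) : Prop :=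
  mult d P e = gmult d P e.

Definition reigvec (d : nat) n (P : 'M[{poly C}]_n) (e : option C) (x : 'cV[C]_n) : Prop :=
  x != 0 /\ ext_eval d P e *m x = 0.
Definition leigvec (d : nat) n (P : 'M[{poly C}]_n) (e : option C) (y : 'cV[C]_n) : Prop :=
  y != 0 /\ adjmx y *m ext_eval d P e = 0.

Definition sum_coldeg n c (B : 'M[{poly C}]_(n, c)) : nat :=
  (\sum_(j < c) (\max_(i < n) size (B i j)).-1)%N.

Definition rnull_basis m n (P : 'M[{poly C}]_(m, n)) (B : 'M[{poly C}]_(n, n - nrank P)) : Prop :=
  P *m B = 0 /\ nrank B = (n - nrank P)%N.

Arguments rnull_basis {m n} P B.

Definition is_rminsum m n (P : 'M[{poly C}]_(m, n)) (M : nat) : Prop :=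
  (exists B, rnull_basis P B /\ sum_coldeg B = M) /\
  (forall B, rnull_basis P B -> (M <= sum_coldeg B)%N).

Definition rminsum m n (P : 'M[{poly C}]_(m, n)) : nat :=
  epsilon (inhabits 0%N) (is_rminsum P).
Definition lminsum m n (P : 'M[{poly C}]_(m, n)) : nat := rminsum P^T.

Definition ptilde n k (P : 'M[{poly C}]_n) (U V : 'M[C]_(n, k)) (Q : 'M[{poly C}]_k)
  (tau : C) : 'M[{poly C}]_n :=
  P + cmx (tau *: U) *m Q *m cmx (adjmx V).

(* the split (a)-(d) of the eigenvalues of P~ for a given tau; Rr / Rl are
   the right / left random eigenvalues *)
Definition adm_split (d : nat) n k (P : 'M[{poly C}]_n) (U V : 'M[C]_(n, k))
  (Q : 'M[{poly C}]_k) (tau : C) (Rr Rl : seq (option C)) : Prop :=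
  let Pt := ptilde P U V Q tau in
  [/\ (uniq Rr /\ size Rr = rminsum P) /\ (uniq Rl /\ size Rl = lminsum P) /\
      (forall e, mult d Pt e = (mult d P e + (e \in Rr) + (e \in Rl) + mult d Q e)%N),
      (exists s : seq (option C), (forall e, mult d P e = count_mem e s) /\
          size s = (nrank P * d - rminsum P - lminsum P)%N) /\
      (forall e, pm_eigenvalue d P e ->
          pm_eigenvalue d Pt e /\
          (forall x, reigvec d Pt e x -> adjmx V *m x = 0) /\
          (forall y, leigvec d Pt e y -> adjmx U *m y = 0)),
      (forall e, e \in Rr ->
          [/\ mult d P e = 0%N, mult d Q e = 0%N, mult d Pt e = 1%N,
              (forall x, reigvec d Pt e x -> adjmx V *m x = 0)
            & (forall y, leigvec d Pt e y -> adjmx U *m y != 0)]),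
      (forall e, e \in Rl ->
          [/\ mult d P e = 0%N, mult d Q e = 0%N /\ e \notin Rr, mult d Pt e = 1%N,
              (forall x, reigvec d Pt e x -> adjmx V *m x != 0)
            & (forall y, leigvec d Pt e y -> adjmx U *m y = 0)])
    &
      (forall e, (0 < mult d Q e)%N ->
          (forall x, reigvec d Pt e x -> adjmx V *m x != 0) /\
          (forall y, leigvec d Pt e y -> adjmx U *m y != 0))].

Definition admissible (d : nat) n k (P : 'M[{poly C}]_n) (U V : 'M[C]_(n, k))
  (Q : 'M[{poly C}]_k) : Prop :=
  [/\ (forall tau : C, 0 < tau -> regular (ptilde P U V Q tau)),
      (forall tau1 tau2 : C, 0 < tau1 -> 0 < tau2 -> forall e,
          mult d (ptilde P U V Q tau1) e = mult d (ptilde P U V Q tau2) e)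
    & (forall tau : C, 0 < tau -> exists Rr Rl, adm_split d P U V Q tau Rr Rl)].

Definition augmented n k (P : 'M[{poly C}]_n) (U V : 'M[C]_(n, k))
  (Q1 Q2 : 'M[{poly C}]_k) : 'M[{poly C}]_(n + k) :=
  block_mx P (cmx U *m Q1) (Q2 *m cmx (adjmx V)) 0.

End MatrixPolynomials.

(* Main.v *)
Require Import Defs.
From HB Require Import structures.
From mathcomp Require Import all_boot all_order all_algebra.
From mathcomp Require Import perm ring zify.
From Stdlib Require Import ClassicalEpsilon.
Import Order.TTheory GRing.Theory Num.Theory.
Local Open Scope ring_scope.

Set Implicit Arguments.
Unset Strict Implicit.
Unset Printing Implicit Defensive.

Section Core.
Variable F : fieldType.

Lemma dsub_ebase m k (P : 'M[F]_(m + k)) : (\rank P <= m)%N ->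
  dsubmx (invmx (col_ebase P) *m P) = 0.
Proof.
move=> rk.
rewrite -{2}(mulmx_ebase P) !mulmxA mulVmx ?col_ebase_unit // mul1mx.
apply/matrixP => i j; rewrite !mxE big1 // => l _; rewrite mxE.
have -> : (rshift m i < \rank P)%N = false.
  by apply/negbTE; rewrite -leqNgt /= (leq_trans rk) // leq_addr.
by rewrite andbF mul0r.
Qed.

Lemma detL_indep m k (A : 'M[F]_(m, m + k)) (B1 : 'M_(m, k)) (B2 : 'M_k)
  (W : 'M_(k, m + k)) (T : 'M_k) :
  \det (block_mx (col_mx A 0) (col_mx B1 B2) W T) =
  \det (block_mx (col_mx A 0) (col_mx B1 B2) W 0).
Proof.
have [d0|dn0] := eqVneq (\det B2) 0.
  suff H : forall T', \det (block_mx (col_mx A 0) (col_mx B1 B2) W T') = 0.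
    by rewrite !H.
  move=> T'; move/eqP: d0 => /det0P [v vn0 vB]; apply/eqP/det0P.
  exists (row_mx (row_mx 0 v) 0).
    by apply: contra vn0; rewrite !row_mx_eq0 => /andP[/andP[_ ->] _].
  rewrite mul_row_block !mul_row_col !mulmx0 !mul0mx vB !addr0.
  by rewrite row_mx0.
suff H : forall T', \det (block_mx (col_mx A 0) (col_mx B1 B2) W T') =
  (\det B2 ^+ k)^-1 * \det (block_mx (col_mx A 0) (col_mx B1 B2) (\det B2 *: W) 0).
  by rewrite !H.
move=> T'.
pose G := block_mx (1%:M : 'M_(m + k)) 0 (row_mx 0 (- (T' *m \adj B2))) ((\det B2)%:M).
have dG : \det G = \det B2 ^+ k by rewrite det_lblock det1 det_scalar mul1r.
have GM : G *m block_mx (col_mx A 0) (col_mx B1 B2) W T' =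
   block_mx (col_mx A 0) (col_mx B1 B2) (\det B2 *: W) 0.
  rewrite mulmx_block !mul1mx !mul0mx !addr0 !mul_row_col !mulmx0 !mul0mx add0r.
  rewrite !add0r !mul_scalar_mx mulNmx -mulmxA mul_adj_mx mul_mx_scalar.
  by rewrite addNr.
rewrite -GM det_mulmx dG mulrA mulVf ?mul1r // expf_neq0 //.
Qed.

Lemma detL m k (P : 'M[F]_(m + k)) (U : 'M_(m + k, k)) (W : 'M_(k, m + k)) (T : 'M_k) :
  (\rank P <= m)%N -> \det (block_mx P U W T) = \det (block_mx P U W 0).
Proof.
move=> rk; set L := invmx (col_ebase P).
have uL : L \in unitmx by rewrite unitmx_inv col_ebase_unit.
have dL : \det L != 0 by rewrite -unitfE -unitmxE.
pose G := block_mx L 0 0 (1%:M : 'M_k).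
suff H : forall T', \det G * \det (block_mx P U W T') =
  \det (block_mx (col_mx (usubmx (L *m P)) 0) (col_mx (usubmx (L *m U)) (dsubmx (L *m U))) W T').
  apply: (mulfI dL); have := H T; have := H 0.
  rewrite /G det_ublock det1 mulr1 => -> ->; exact: detL_indep.
move=> T'; rewrite -det_mulmx mulmx_block !mul0mx !mul1mx !addr0 !add0r.
by rewrite -(dsub_ebase rk) !vsubmxK.
Qed.

Lemma det_core m k (P : 'M[F]_(m + k)) (U : 'M_(m + k, k)) (W : 'M_(k, m + k)) (S : 'M_k) :
  (\rank P <= m)%N -> S \in unitmx ->
  \det (P + U *m S *m W) = (-1) ^+ k * \det S * \det (block_mx P U W 0).
Proof.
move=> rk uS.
pose T := - invmx S.
have E : block_mx P U W T =
   block_mx 1%:M (U *m (- S)) 0 1%:M *m block_mx (P + U *m S *m W) 0 W T.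
  have h1 : U *m - S *m T = U by rewrite /T -mulmxA mulmxN mulNmx opprK mulmxV // mulmx1.
  rewrite mulmx_block !mul1mx !mul0mx ?mulmx0 !add0r ?addr0 h1.
  by rewrite mulmxN mulNmx addrK.
have := detL U W T rk; rewrite E det_mulmx det_ublock !det1 mul1r det_lblock => <-.
rewrite /T -scaleN1r detZ det_inv mul1r.
have sn0 : \det S != 0 by rewrite -unitfE -unitmxE.
have c2 : (-1) ^+ k * (-1) ^+ k = 1 :> F by rewrite -exprMn mulrN1 opprK expr1n.
set x := \det _; set c := (-1) ^+ k; set s := \det S.
rewrite -[LHS]mul1r -c2 -/c; move: sn0; rewrite -/s => sn0; clearbody x c s. field. exact: sn0.
Qed.

End Core.

Section PolySmith.
Variable F : fieldType.
Local Notation R := {poly F}.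

Lemma poly_Smith m n (M : 'M[R]_(m, n)) :
  {L : 'M[R]_m & L \in unitmx &
  {Rm : 'M[R]_n & Rm \in unitmx &
  {d : seq R | sorted (@dvdp F) d &
   M = L *m (\matrix_(i, j) (d`_i *+ (i == j :> nat))) *m Rm}}}.
Proof.
move: {2}_.+1 (ltnSn (m + n)) => mn.
elim: mn => // mn IHmn in m n M *; rewrite ltnS => le_mn.
have [[i j] nzMij | no_ij] := pickP (fun k => M k.1 k.2 != 0); last first.
  do 2![exists 1%:M; first exact: unitmx1]; exists nil => //=.
  apply/matrixP=> i j; apply/eqP; rewrite mulmx1 mul1mx mxE nth_nil mul0rn.
  exact: negbFE (no_ij (i, j)).
do [case: m i => [[]//|m] i; case: n j => [[]//|n] j /=] in M nzMij le_mn *.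
wlog Dj: j M nzMij / j = 0; last rewrite {j}Dj in nzMij.
  case/(_ 0 (xcol j 0 M)); rewrite ?mxE ?tpermR // => L uL [R' uR [d dvD dM]].
  exists L => //; exists (xcol j 0 R'); last exists d => //=.
     by rewrite xcolE unitmx_mul uR unitmx_perm.
  by rewrite xcolE !mulmxA -dM xcolE -mulmxA -perm_mxM tperm2 perm_mx1 mulmx1.
move Da: (M i 0) nzMij => a nz_a.
have [A leA] := ubnP (size a); elim: A => // A IHa in a leA m n M i Da nz_a le_mn *.
wlog [j a'Mij]: m n M i Da le_mn / {j | ~~ (a %| M i j)}; last first.
  have nz_j: j != 0 by apply: contraNneq a'Mij => ->; rewrite Da dvdpp.
  case: n => [[[]//]|n] in j le_mn nz_j M a'Mij Da *.
  wlog{nz_j} Dj: j M a'Mij Da / j = 1; last rewrite {j}Dj in a'Mij.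
    case/(_ 1 (xcol j 1 M)); rewrite ?mxE ?tpermR ?tpermD //.
    move=> L uL [R' uR [d dvD dM]]; exists L => //.
    exists (xcol j 1 R'); first by rewrite xcolE unitmx_mul uR unitmx_perm.
    exists d; rewrite //= xcolE !mulmxA -dM xcolE -mulmxA -perm_mxM tperm2.
    by rewrite perm_mx1 mulmx1.
  set a1 := M i 1.
  pose u := (egcdp a a1).1; pose v := (egcdp a a1).2.
  pose b := u * a + v * a1.
  have bE : gcdp a a1 %= b by exact: egcdpE.
  have dvb_a : b %| a by rewrite -(eqp_dvdl _ bE) dvdp_gcdl.
  have dvb_a1 : b %| a1 by rewrite -(eqp_dvdl _ bE) dvdp_gcdr.
  have nz_b: b != 0.
    by apply: contraNneq nz_a => b0; move: dvb_a; rewrite b0 dvd0p.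
  have{leA} ltA: (size b < A)%N.
    rewrite -ltnS (leq_trans _ leA) // ltnS ltn_neqAle.
    rewrite -(eqp_size bE) leq_gcdpl // andbT.
    apply: contra a'Mij => /eqP Hs.
    have : gcdp a a1 %= a by rewrite -dvdp_size_eqp ?dvdp_gcdl // Hs.
    by move/eqp_dvdl => <-; rewrite dvdp_gcdr.
  pose t2 := [fun j : 'I_2 => [tuple _; _]`_j : R].
  pose Uul := \matrix_(k, j) t2 (t2 u (- (a1 %/ b)) j) (t2 v (a %/ b) j) k.
  pose U : 'M_(2 + n) := block_mx Uul 0 0 1%:M; pose M1 := M *m U.
  have uU: U \in unitmx.
    rewrite unitmxE det_ublock det1 (expand_det_col _ 0) big_ord_recl big_ord1.
    do 2!rewrite /cofactor [row' _ _]mx11_scalar !mxE det_scalar1 /=.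
    rewrite mulr1 mul1r mulN1r opprK.
    suff -> : u * (a %/ b) + v * (a1 %/ b) = 1 by rewrite unitr1.
    apply: (mulIf nz_b); rewrite mul1r mulrDl -!mulrA !divpK //.
  have{} Db: M1 i 0 = b.
    rewrite /M1 -(lshift0 n 1) [U]block_mxEh mul_mx_row row_mxEl.
    rewrite -[M](@hsubmxK _ _ 2) (@mul_row_col _ _ 2) mulmx0 addr0 !mxE /=.
    rewrite big_ord_recl big_ord1 !mxE /= [lshift _ _]((_ =P 0) _) // Da.
    by rewrite [lshift _ _]((_ =P 1) _) // /b mulrC (mulrC v).
  have [L uL [R' uR [d dvD dM1]]] := IHa b ltA _ _ M1 i Db nz_b le_mn.
  exists L => //; exists (R' *m invmx U); last exists d => //.
    by rewrite unitmx_mul uR unitmx_inv.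
  by rewrite mulmxA -dM1 mulmxK.
move=> {A leA}IHa; wlog Di: i M Da / i = 0; last rewrite {i}Di in Da.
  case/(_ 0 (xrow i 0 M)); rewrite ?mxE ?tpermR // => L uL [R' uR [d dvD dM]].
  exists (xrow i 0 L); first by rewrite xrowE unitmx_mul unitmx_perm.
  exists R' => //; exists d; rewrite //= xrowE -!mulmxA (mulmxA L) -dM xrowE.
  by rewrite mulmxA -perm_mxM tperm2 perm_mx1 mul1mx.
without loss /forallP a_dvM0: / [forall j, a %| M 0%R j].
  case: (altP forallP) => [_ IH|/forallPn/sigW/IHa IH _]; exact: IH.
without loss{Da a_dvM0} Da: M / forall j, M 0 j = a.
  pose Uur := col' 0 (\row_j (1 - (M 0%R j %/ a))).
  pose U : 'M_(1 + n) := block_mx 1 Uur 0 1%:M; pose M1 := M *m U.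
  have uU: U \in unitmx by rewrite unitmxE det_ublock !det1 mulr1 unitr1.
  case/(_ (M *m U)) => [j | L uL [R' uR [d dvD dM]]].
    rewrite -(lshift0 m 0) -[M](@submxK _ 1 _ 1) (@mulmx_block _ 1 m 1).
    rewrite (@col_mxEu _ 1) !mulmx1 mulmx0 addr0 [ulsubmx _]mx11_scalar.
    rewrite mul_scalar_mx !mxE !lshift0 Da.
    case: splitP => [j0 _ | j1 Dj]; rewrite ?ord1 !mxE // lshift0 rshift1.
    by rewrite mulrBr mulr1 mulrC divpK ?subrK.
  exists L => //; exists (R' * U^-1); first by rewrite unitmx_mul uR unitmx_inv.
  by exists d; rewrite //= mulmxA -dM mulmxK.
without loss{IHa} /forallP/(_ (_, _))/= a_dvM: / [forall k, a %| M k.1 k.2].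
  case: (altP forallP) => [_|/forallPn/sigW [[i j] /= a'Mij] _]; first exact.
  have [|||L uL [R' uR [d dvD dM]]] := IHa _ _ M^T j; rewrite ?mxE 1?addnC //.
    by exists i; rewrite mxE.
  exists R'^T; last exists L^T; rewrite ?unitmx_tr //; exists d => //.
  rewrite -[M]trmxK dM !trmx_mul mulmxA; congr (_ *m _ *m _).
  by apply/matrixP=> i1 j1 /[!mxE]; case: eqVneq => // ->.
without loss{nz_a a_dvM} a1: M a Da / a = 1.
  pose M1 := map_mx (fun x => x %/ a) M; case/(_ M1 1)=> // [k|L uL [R' uR [d dvD dM]]].
    by rewrite !mxE Da divpp.
  exists L => //; exists R' => //; exists [seq a * x | x <- d].
    case: d dvD {dM} => //= x d; elim: d x => //= y d IHd x /andP[dv_xy /IHd].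
    by rewrite dvdp_mul2l ?dv_xy.
  have ->: M = a *: M1 by apply/matrixP=> i j; rewrite !mxE mulrC divpK ?a_dvM.
  rewrite dM scalemxAl scalemxAr; congr (_ *m _ *m _).
  apply/matrixP=> i j; rewrite !mxE mulrnAr; congr (_ *+ _).
  have [lt_i_d | le_d_i] := ltnP i (size d); first by rewrite (nth_map 0).
  by rewrite !nth_default ?size_map ?mulr0.
rewrite {a}a1 -[m.+1]/(1 + m)%N -[n.+1]/(1 + n)%N in M Da *.
pose Mu := ursubmx M; pose Ml := dlsubmx M.
have{} Da: ulsubmx M = 1 by rewrite [_ M]mx11_scalar !mxE !lshift0 Da.
pose M1 := - (Ml *m Mu) + drsubmx M.
have [|L uL [R' uR [d dvD dM1]]] := IHmn m n M1; first by rewrite -addnS ltnW.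
exists (block_mx 1 0 Ml L).
  by rewrite unitmxE det_lblock det_scalar1 mul1r.
exists (block_mx 1 Mu 0 R').
  by rewrite unitmxE det_ublock det_scalar1 mul1r.
exists (1 :: d); set D1 := \matrix_(i, j) _ in dM1.
  by rewrite /= path_min_sorted //; apply/allP => g _; apply: dvd1p.
rewrite [D in _ *m D *m _](_ : _ = block_mx 1 0 0 D1); last first.
  by apply/matrixP=> i j; do 3?[rewrite ?mxE ?ord1 //=; case: splitP => ? ->].
rewrite !mulmx_block !(mul0mx, mulmx0, addr0) !mulmx1 add0r mul1mx -Da -dM1.
by rewrite addNKr submxK.
Qed.

End PolySmith.

Section P2.
Variable C : numClosedFieldType.

Lemma diag_seqE n (s : seq {poly C}) :
  diag_seq n n s = diag_mx (\row_(i < n) s`_i).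
Proof.
apply/matrixP=> i j; rewrite !mxE -val_eqE /=.
by case: eqP => _; rewrite ?mulr1n ?mulr0n.
Qed.

Lemma unit_noroot (p : {poly C}) z : p \is a GRing.unit -> ~~ root p z.
Proof.
move=> up; apply/negP => /rootP r0.
have := mulrV up; move/(congr1 (horner^~ z)).
by rewrite hornerM r0 mul0r hornerC => /eqP; rewrite eq_sym oner_eq0.
Qed.

Lemma mup_prod z (s : seq {poly C}) : all (fun p => p != 0) s ->
  mup z (\prod_(p <- s) p) = (\sum_(p <- s) mup z p)%N.
Proof.
elim: s => [|p s IH] /=.
  by rewrite !big_nil mupNroot // root1.
case/andP=> p0 s0; rewrite !big_cons mupM ?IH //.
by rewrite prodf_seq_neq0; apply/allP => q qs; have := allP s0 q qs.
Qed.

Lemma smith_det n (M : 'M[{poly C}]_n) s : smith_invariants M s ->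
  regular M -> forall z, (\sum_(p <- s) mup z p)%N = mup z (\det M).
Proof.
case=> E [F] [uE uF -> szs _] reg z.
move: reg; rewrite /regular.
rewrite !det_mulmx diag_seqE det_diag => reg.
have nz : forall i : 'I_n, s`_i != 0.
  move=> i; apply: contraNneq reg => si0.
  by rewrite (bigD1 i) //= mxE si0 mul0r mulr0 mul0r.
have szn : size s = n.
  apply/eqP; rewrite eqn_leq (leq_trans szs) ?geq_minl //=.
  move: nz; case: (n) => // n0 nz.
  have := nz ord_max; apply: contraR; rewrite -ltnNge ltnS => le.
  by rewrite nth_default.
have pE : \prod_i (\row_(i < n) s`_i) 0 i = \prod_(p <- s) p.
  rewrite (big_nth 0) big_mkord szn; apply: eq_bigr => i _; by rewrite mxE.
have s0 : all (fun p => p != 0) s.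
  apply/(all_nthP 0) => i; rewrite szn => lt; exact: (nz (Ordinal lt)).
move: reg; rewrite pE => reg.
have Ep : \det E != 0 by apply: contraNneq reg => ->; rewrite !mul0r.
have Fp : \det F != 0 by apply: contraNneq reg => ->; rewrite !mulr0.
have Sp : \prod_(p <- s) p != 0 by apply: contraNneq reg => ->; rewrite mulr0 mul0r.
rewrite mupM ?mulf_neq0 // mupM // mupNroot ?unit_noroot //.
by rewrite [mup z (\det F)]mupNroot ?unit_noroot // addn0 mup_prod.
Qed.


Lemma smith_exists n (M : 'M[{poly C}]_n) : regular M -> exists s, smith_invariants M s.
Proof.
move=> reg.
have [L uL [R uR [d sd dM]]] := poly_Smith M.
pose D := \matrix_(i < n, j < n) (d`_i *+ (i == j :> nat)).
have DE : D = diag_mx (\row_(i < n) d`_i).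
  by apply/matrixP=> i j; rewrite !mxE -val_eqE.
have nz : forall i : 'I_n, d`_i != 0.
  move=> i; apply: contraNneq reg => si0.
  rewrite /regular dM -/D DE !det_mulmx det_diag.
  by rewrite (bigD1 i) //= mxE si0 mul0r mulr0 mul0r.
pose c := \row_(i < n) (lead_coef d`_i)%:P.
pose s := [seq (lead_coef x)^-1 *: x | x <- take n d].
have szd : (n <= size d)%N.
  move: nz; case: (n) => // n0 nz.
  have := nz ord_max; apply: contraR; rewrite -ltnNge ltnS => le.
  by rewrite nth_default.
have szs : size s = n by rewrite size_map size_take_min; apply/minn_idPl.
have sE : forall i : 'I_n, s`_i = (lead_coef d`_i)^-1 *: d`_i.
  move=> i; rewrite (nth_map 0) ?nth_take // size_take_min leq_min ltn_ord /=; exact: leq_trans (ltn_ord i) szd.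
exists s, L, (diag_mx c *m R); split.
- by rewrite /unimodular -unitmxE.
- rewrite /unimodular det_mulmx unitrM -[\det R \is a _]unitmxE uR andbT det_diag.
  apply: unitr_prod => i _; rewrite mxE poly_unitE size_polyC coefC unitfE.
  by rewrite lead_coef_eq0 nz.
- rewrite dM mulmxA; congr (_ *m _); rewrite -mulmxA; congr (_ *m _).
  rewrite diag_seqE mulmx_diag; apply/matrixP => i j; rewrite !mxE sE.
  rewrite -val_eqE /=; case: eqP => [/val_inj ->|_]; rewrite ?mulr1n ?mulr0n ?mulr0 //.
  by rewrite -mul_polyC mulrC mulrA -polyCM mulfV ?lead_coef_eq0 ?nz // mul1r.
- by rewrite szs minnn.
- apply/andP; split.
    apply/allP => p /mapP [x xin ->]; apply/monicP.
    rewrite lead_coefZ mulVf // lead_coef_eq0.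
    have := xin; rewrite -(nth_index 0 xin) => _.
    have ilt : (index x (take n d) < n)%N.
      by rewrite -[X in (_ < X)%N](size_takel szd) index_mem.
    by rewrite nth_take // (nz (Ordinal ilt)).
  have := take_sorted n sd; rewrite /s sorted_map; apply: sub_sorted.
  move=> x y /=.
  have [->|x0] := eqVneq x 0; first by rewrite dvd0p => /eqP ->; rewrite !scaler0.
  have [->|y0] := eqVneq y 0; first by rewrite scaler0 dvdp0.
  move=> xy; by rewrite dvdpZl ?dvdpZr ?invr_eq0 ?lead_coef_eq0.
Qed.

Lemma alg_mult_det n (M : 'M[{poly C}]_n) z : regular M -> alg_mult M z = mup z (\det M).
Proof.
move=> reg; rewrite /alg_mult /invpolys.
apply: (smith_det _ reg); apply: epsilon_spec; exact: smith_exists.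
Qed.

End P2.

Section Main.
Variable C : numClosedFieldType.

Lemma poly_eq_pw (p q r : {poly C}) : r != 0 ->
  (forall z, ~~ root r z -> p.[z] = q.[z]) -> p = q.
Proof.
move=> r0 H; apply/eqP; rewrite -subr_eq0.
have : (p - q) * r == 0.
  apply/negPn/negP => h0.
  pose rs := [seq i%:R : C | i <- iota 0 (size ((p - q) * r))].
  suff : (size rs < size ((p - q) * r)%R)%N by rewrite size_map size_iota ltnn.
  apply: max_poly_roots h0 _ _.
    apply/allP => x _; rewrite /root hornerM hornerD hornerN.
    have [rx|nrx] := boolP (root r x); first by move/rootP: rx => ->; rewrite mulr0.
    by rewrite H // subrr mul0r.
  rewrite map_inj_uniq ?iota_uniq // => i j /eqP; rewrite eqr_nat => /eqP.
  done.
by rewrite mulf_eq0 (negPf r0) orbF.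
Qed.

Lemma pevalD m n (A B : 'M[{poly C}]_(m, n)) z :
  peval (A + B) z = peval A z + peval B z.
Proof. by apply/matrixP => i j; rewrite !mxE hornerD. Qed.

Lemma pevalM m n p (A : 'M[{poly C}]_(m, n)) (B : 'M_(n, p)) z :
  peval (A *m B) z = peval A z *m peval B z.
Proof. exact: (map_mxM (horner_eval z)). Qed.

Lemma pevalC m n (A : 'M[C]_(m, n)) z : peval (cmx A) z = A.
Proof. by apply/matrixP => i j; rewrite !mxE hornerC. Qed.

Lemma peval0 m n z : peval (0 : 'M[{poly C}]_(m, n)) z = 0.
Proof. by apply/matrixP => i j; rewrite !mxE horner0. Qed.

Lemma pevalB m1 m2 n1 n2 (A : 'M[{poly C}]_(m1, n1)) (B : 'M_(m1, n2))
  (Cc : 'M_(m2, n1)) (D : 'M_(m2, n2)) z :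
  peval (block_mx A B Cc D) z = block_mx (peval A z) (peval B z) (peval Cc z) (peval D z).
Proof. exact: map_block_mx. Qed.

Lemma pevaldet n (A : 'M[{poly C}]_n) z : (\det A).[z] = \det (peval A z).
Proof. by rewrite /peval -[X in X = _]horner_evalE -det_map_mx. Qed.

Lemma rank_le_nrank m n (A : 'M[{poly C}]_(m, n)) z : (\rank (peval A z) <= nrank A)%N.
Proof.
rewrite /nrank.
have lt : (\rank (peval A z) < m.+1)%N by rewrite ltnS rank_leq_row.
apply: (leq_trans _ (leq_bigmax_cond (Ordinal lt) _)) => //.
rewrite /pbool; case: excluded_middle_informative => // [[]].
by exists z.
Qed.


Definition rv (d : nat) (p : {poly C}) : {poly C} := \poly_(l < d.+1) p`_(d - l).

Lemma rvD d p q : rv d (p + q) = rv d p + rv d q.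
Proof. by apply/polyP => i; rewrite coefD !coef_poly; case: ifP; rewrite ?coefD ?addr0. Qed.

Lemma rv0 d : rv d 0 = 0.
Proof. by apply/polyP => i; rewrite coef_poly coef0; case: ifP; rewrite ?coef0. Qed.

Lemma rvCM d c p : rv d (c%:P * p) = c%:P * rv d p.
Proof.
apply/polyP => i; rewrite !mul_polyC coefZ !coef_poly; case: ifP; rewrite ?coefZ ?mulr0 //.
Qed.

Lemma rvMC d c p : rv d (p * c%:P) = rv d p * c%:P.
Proof. by rewrite mulrC rvCM mulrC. Qed.

Lemma rv_sum d I (r : seq I) (F : I -> {poly C}) :
  rv d (\sum_(i <- r) F i) = \sum_(i <- r) rv d (F i).
Proof. exact: (big_morph _ (rvD d) (rv0 d)). Qed.

Lemma revmxE d m n (M : 'M[{poly C}]_(m, n)) : revmx d M = map_mx (rv d) M.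
Proof. by []. Qed.

Lemma revmxD d m n (A B : 'M[{poly C}]_(m, n)) : revmx d (A + B) = revmx d A + revmx d B.
Proof. by apply/matrixP => i j; rewrite !mxE -/(rv d _) rvD. Qed.

Lemma revmx0 d m n : revmx d (0 : 'M[{poly C}]_(m, n)) = 0.
Proof. by apply/matrixP => i j; rewrite !mxE -/(rv d _) rv0. Qed.

Lemma revmx_cmxl d m n p (X : 'M[C]_(m, n)) (B : 'M[{poly C}]_(n, p)) :
  revmx d (cmx X *m B) = cmx X *m revmx d B.
Proof.
apply/matrixP => i j; rewrite !mxE -/(rv d _) rv_sum; apply: eq_bigr => l _.
by rewrite !mxE rvCM.
Qed.

Lemma revmx_cmxr d m n p (B : 'M[{poly C}]_(m, n)) (X : 'M[C]_(n, p)) :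
  revmx d (B *m cmx X) = revmx d B *m cmx X.
Proof.
apply/matrixP => i j; rewrite !mxE -/(rv d _) rv_sum; apply: eq_bigr => l _.
by rewrite !mxE rvMC.
Qed.

Lemma revmx_aug d n k (P : 'M[{poly C}]_n) (U V : 'M[C]_(n, k)) (Q1 Q2 : 'M[{poly C}]_k) :
  revmx d (augmented P U V Q1 Q2) = augmented (revmx d P) U V (revmx d Q1) (revmx d Q2).
Proof.
rewrite /augmented [LHS]map_block_mx -!revmxE revmx_cmxl revmx_cmxr.
by rewrite revmx0.
Qed.

Lemma revmx_pt d n k (P : 'M[{poly C}]_n) (U V : 'M[C]_(n, k)) (Q : 'M[{poly C}]_k) tau :
  revmx d (ptilde P U V Q tau) = ptilde (revmx d P) U V (revmx d Q) tau.
Proof. by rewrite /ptilde revmxD revmx_cmxr revmx_cmxl. Qed.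

Definition bounded d m n (M : 'M[{poly C}]_(m, n)) := forall i j, (size (M i j) <= d.+1)%N.

Lemma bounded_mxdeg d m n (M : 'M[{poly C}]_(m, n)) : mxdeg_is M d -> bounded d M.
Proof.
rewrite /mxdeg_is => H i j; rewrite -H.
apply: (leq_trans _ (leq_bigmax i)); exact: (leq_bigmax j).
Qed.

Lemma bounded_sum d I (r : seq I) (F : I -> {poly C}) :
  (forall i, (size (F i) <= d.+1)%N) -> (size (\sum_(i <- r) F i)%R <= d.+1)%N.
Proof.
move=> H; elim/big_rec: _ => [|i x _ hx]; first by rewrite size_poly0.
by apply: leq_trans (size_polyD _ _) _; rewrite geq_max H hx.
Qed.

Lemma bounded_cmxl d m n p (X : 'M[C]_(m, n)) (B : 'M[{poly C}]_(n, p)) :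
  bounded d B -> bounded d (cmx X *m B).
Proof.
move=> hB i j; rewrite !mxE; apply: bounded_sum => l.
by rewrite !mxE mul_polyC (leq_trans (size_scale_leq _ _)).
Qed.

Lemma bounded_cmxr d m n p (B : 'M[{poly C}]_(m, n)) (X : 'M[C]_(n, p)) :
  bounded d B -> bounded d (B *m cmx X).
Proof.
move=> hB i j; rewrite !mxE; apply: bounded_sum => l.
by rewrite !mxE mulrC mul_polyC (leq_trans (size_scale_leq _ _)).
Qed.

Lemma bounded_block d m1 m2 n1 n2 (A : 'M[{poly C}]_(m1, n1)) (B : 'M_(m1, n2))
  (Cc : 'M_(m2, n1)) (D : 'M_(m2, n2)) :
  bounded d A -> bounded d B -> bounded d Cc -> bounded d D ->
  bounded d (block_mx A B Cc D).
Proof.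
move=> hA hB hC hD i j; rewrite -(splitK i) -(splitK j).
case: (split i) => i'; case: (split j) => j' /=;
  by rewrite ?block_mxEul ?block_mxEur ?block_mxEdl ?block_mxEdr.
Qed.

Lemma bounded0 d m n : bounded d (0 : 'M[{poly C}]_(m, n)).
Proof. by move=> i j; rewrite mxE size_poly0. Qed.

Lemma rv_eval d (p : {poly C}) (z : C) : (size p <= d.+1)%N -> z != 0 ->
  (rv d p).[z] = z ^+ d * p.[z^-1].
Proof.
move=> sp z0; rewrite /rv horner_poly (horner_coef_wide _ sp) mulr_sumr.
rewrite (reindex_inj rev_ord_inj) /=; apply: eq_bigr => i _.
have le : (i <= d)%N := ltnSE (ltn_ord i).
rewrite subSS subKn // mulrCA; congr (_ * _).
rewrite exprVn -[in z ^+ d](subnK le) exprD mulrK //.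
by rewrite unitfE expf_neq0.
Qed.

Lemma peval_rev d m n (M : 'M[{poly C}]_(m, n)) z : bounded d M -> z != 0 ->
  peval (revmx d M) z = z ^+ d *: peval M z^-1.
Proof.
by move=> hM z0; apply/matrixP => i j; rewrite !mxE -/(rv d _) rv_eval.
Qed.

Lemma rev_regular d n (M : 'M[{poly C}]_n) : bounded d M -> regular M -> regular (revmx d M).
Proof.
move=> hM; rewrite /regular; apply: contraNN => /eqP r0; apply/eqP.
apply: (@poly_eq_pw _ _ 'X); first by rewrite polyX_eq0.
move=> w; rewrite rootX horner0 => w0.
have wi0 : w^-1 != 0 by rewrite invr_eq0.
have := congr1 (horner^~ w^-1) r0.
rewrite horner0 pevaldet peval_rev // detZ -pevaldet invrK => /eqP.
by rewrite mulf_eq0 expf_eq0 (negPf (expf_neq0 _ wi0)) andbF orFb => /eqP.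
Qed.

Lemma rank_rev d n m (P : 'M[{poly C}]_n) z : bounded d P -> nrank P = m -> z != 0 ->
  (\rank (peval (revmx d P) z) <= m)%N.
Proof.
move=> hP <- z0; rewrite peval_rev //.
exact: leq_trans (mxrank_scale _ _) (rank_le_nrank _ _).
Qed.


Lemma fin_id m k (P : 'M[{poly C}]_(m + k)) (Q1 Q2 Q : 'M[{poly C}]_k)
  (U V : 'M[C]_(m + k, k)) (tau : C) (r : {poly C}) :
  r != 0 -> (forall z, ~~ root r z -> (\rank (peval P z) <= m)%N) ->
  regular Q -> tau != 0 ->
  \det (augmented P U V Q1 Q2) * (((-1) ^+ k * tau ^+ k)%:P * \det Q) =
  \det Q1 * \det Q2 * \det (ptilde P U V Q tau).
Proof.
move=> r0 hr rQ t0.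
set M0 := block_mx P (cmx U) (cmx (adjmx V)) 0.
have hA : augmented P U V Q1 Q2 = block_mx 1%:M 0 0 Q2 *m M0 *m block_mx 1%:M 0 0 Q1.
  rewrite /augmented /M0 !mulmx_block !mul1mx !mul0mx !mulmx0 !mulmx1 ?addr0 ?add0r.
  by rewrite ?mul0mx ?addr0 ?add0r.
have hdA : \det (augmented P U V Q1 Q2) = \det Q2 * \det M0 * \det Q1.
  by rewrite hA !det_mulmx !det_ublock !det1 !mul1r.
have hPt : \det (ptilde P U V Q tau) = ((-1) ^+ k * tau ^+ k)%:P * \det Q * \det M0.
  apply: (@poly_eq_pw _ _ (r * \det Q)); first by rewrite mulf_neq0.
  move=> z; rewrite rootM negb_or => /andP [rz qz].
  rewrite !hornerM hornerC !pevaldet /ptilde pevalD !pevalM !pevalC.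
  rewrite /M0 pevalB !pevalC peval0.
  rewrite -scalemxAl scalemxAr det_core ?hr //.
    rewrite detZ; ring.
  rewrite unitmxE detZ unitfE mulf_neq0 ?expf_neq0 //.
  by rewrite -pevaldet; move: qz; rewrite /root.
rewrite hdA hPt; ring.
Qed.

Lemma mup_id (a b c1 c2 c3 : {poly C}) (c : C) z :
  a != 0 -> b != 0 -> c != 0 -> a * (c%:P * b) = c1 * c2 * c3 ->
  [/\ c1 != 0, c2 != 0, c3 != 0 &
   (mup z a + mup z b = mup z c1 + mup z c2 + mup z c3)%N].
Proof.
move=> a0 b0 c0 E.
have cb0 : c%:P * b != 0 by rewrite mulf_neq0 ?polyC_eq0.
have l0 : c1 * c2 * c3 != 0 by rewrite -E mulf_neq0.
have c30 : c3 != 0 by apply: contraNneq l0 => ->; rewrite mulr0.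
have c120 : c1 * c2 != 0 by apply: contraNneq l0 => ->; rewrite mul0r.
have c10 : c1 != 0 by apply: contraNneq c120 => ->; rewrite mul0r.
have c20 : c2 != 0 by apply: contraNneq c120 => ->; rewrite mulr0.
split => //.
have := congr1 (mup z) E; rewrite !mupM // ?polyC_eq0 //.
by rewrite (mupNroot (x := z) (q := c%:P)) // /root hornerC.
Qed.

End Main.

Unset Implicit Arguments.
Set Strict Implicit.

Theorem proposition3p7 (C : numClosedFieldType) (n k d : nat)
  (P : 'M[{poly C}]_n) (Q1 Q2 Q : 'M[{poly C}]_k) (U V : 'M[C]_(n, k)) :
  mxdeg_is P d ->
  nrank P = (n - k)%N ->
  (forall e, pm_eigenvalue d P e -> semisimple d P e) ->
  regular Q1 -> mxdeg_is Q1 d ->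
  regular Q2 -> mxdeg_is Q2 d ->
  (forall e, (mult d Q1 e + mult d Q2 e <= 1)%N) ->
  adjmx U *m U = 1%:M -> adjmx V *m V = 1%:M ->
  regular (augmented P U V Q1 Q2) ->
  regular Q -> mxdeg_is Q d ->
  (forall e, (mult d Q e <= 1)%N) ->
  (forall e, (0 < mult d Q e)%N -> ~ pm_eigenvalue d P e) ->
  admissible d P U V Q ->
  forall tau : C, 0 < tau -> forall Rr Rl : seq (option C),
    adm_split d P U V Q tau Rr Rl ->
    forall e : option C,
      mult d (augmented P U V Q1 Q2) e =
      (mult d Q1 e + mult d Q2 e + ((e \in Rr) + (e \in Rl)) + mult d P e)%N.
Proof.
move=> degP nrP _ rQ1 dQ1 rQ2 dQ2 _ UU VV rPa rQ dQ _ _ adm tau tau0 Rr Rl spl e.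
have kn : (k <= n)%N.
  have := mxrankM_maxl (adjmx U) U; rewrite UU mxrank1 => h.
  exact: leq_trans h (rank_leq_col _).
have t0 : tau != 0 by rewrite gt_eqF.
case: adm => regPt _ _; have rPt := regPt tau tau0.
case: spl => [[_ [_ hmult]] _ _ _ _].
have c0 : (-1) ^+ k * tau ^+ k != 0 :> C by rewrite mulf_neq0 ?signr_eq0 ?expf_neq0.
have [m Hn] : exists m, n = (m + k)%N by exists (n - k)%N; rewrite subnK.
subst n; rewrite addnK in nrP.
case: e => [z|].
  have hr : forall w, ~~ root 1 w -> (\rank (peval P w) <= m)%N.
    by move=> w _; apply: leq_trans (rank_le_nrank _ _) _; rewrite nrP.
  have E := fin_id Q1 Q2 U V (oner_neq0 _) hr rQ t0.
  have [_ _ _ hm] := mup_id z rPa rQ c0 E.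
  move: (hmult (Some z)); rewrite /mult /= (alg_mult_det _ rPt) (alg_mult_det _ rQ) (alg_mult_det _ rPa) (alg_mult_det _ rQ1) (alg_mult_det _ rQ2) => hmz.
  move: hm hmz; lia.
have bP := bounded_mxdeg degP.
have hr : forall w, ~~ root 'X w -> (\rank (peval (revmx d P) w) <= m)%N.
  by move=> w; rewrite rootX => w0; apply: rank_rev.
have rQr : regular (revmx d Q) by apply: rev_regular (bounded_mxdeg dQ) rQ.
have rPar : regular (revmx d (augmented P U V Q1 Q2)).
  apply: rev_regular rPa; apply: bounded_block => //.
  - exact: bounded_cmxl (bounded_mxdeg dQ1).
  - exact: bounded_cmxr (bounded_mxdeg dQ2).
  - exact: bounded0.
have E := fin_id (revmx d Q1) (revmx d Q2) U V (negbT (polyX_eq0 _)) hr rQr t0.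
rewrite -revmx_aug -revmx_pt in E.
have [rQ1r rQ2r rPtr hm] := mup_id 0 rPar rQr c0 E.
move: (hmult None); rewrite /mult /= (alg_mult_det _ rPtr) (alg_mult_det _ rQr).
rewrite (alg_mult_det _ rPar) (alg_mult_det _ rQ1r) (alg_mult_det _ rQ2r) => hmz.
rewrite hmz in hm; move: hm; move: (mup _ (\det (revmx d Q))) (mup _ (\det (revmx d Q1))) (mup _ (\det (revmx d Q2))) (mup _ (\det (revmx d (augmented _ _ _ _ _)))) (alg_mult (revmx d P) _) (nat_of_bool _) (nat_of_bool _) => q q1 q2 a p b1 b2. lia.
Qed.
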